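(* Let $\Omega$ be a transitive state space (normalized so that its maximally mixed state $\omega_M$ satisfies $(\omega_M,\omega_M)_E=1$). Then the vector $\hat u\in V$ representing the unit effect $u$ via the inner product $\langle\cdot,\cdot\rangle_{GL(\Omega)}$ (i.e. $u(x)=\langle\hat u,x\rangle_{GL(\Omega)}$ for all $x\in V$; $\hat u$ lies in the internal dual cone $V^{*int}_{+}$) is equal to $\omega_M$.
   Context: $V=\mathbb R^{N+1}$ with Euclidean inner product $(\cdot,\cdot)_E$. A state space $\Omega\subset V$ is a compact convex set with $\mathrm{span}(\Omega)=V$ and $0\notin\mathrm{aff}(\Omega)$; $V_+=\{\lambda\omega:\lambda\ge0,\omega\in\Omega\}$; the unit effect $u\in V^*$ is the linear functional with $u(\omega)=1$ for all $\omega\in\Omega$. $GL(\Omega)$ is the compact group of linear bijections $T:V\to V$ with $T(\Omega)=\Omega$, $\mu$ its normalized Haar measure, and $\langle x,y\rangle_{GL(\Omega)}=\int_{GL(\Omega)}(Tx,Ty)_E\,d\mu(T)$. $\Omega$ is transitive if $GL(\Omega)$ acts transitively on the extreme points of $\Omega$; in that case there is a unique state $\omega_M\in\Omega$ (maximally mixed state) with $T\omega_M=\omega_M$ for all $T\in GL(\Omega)$, and by convention $\Omega$ is rescaled so that $(\omega_M,\omega_M)_E=1$. $V^{*int}_+=\{y\in V:\langle x,y\rangle_{GL(\Omega)}\ge0\ \forall x\in V_+\}$. *)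

(* Defs.v *)
From HB Require Import structures.
From mathcomp Require Import all_boot all_order all_algebra.
From mathcomp Require Import all_classical all_reals all_analysis.
Set Implicit Arguments. Unset Strict Implicit. Unset Printing Implicit Defensive.
Import Order.TTheory GRing.Theory Num.Theory.
Import numFieldNormedType.Exports.
Local Open Scope classical_set_scope.
Local Open Scope ring_scope.

(* V = R^(N+1), realised as column vectors 'cV[R]_(N.+1);
   linear maps V -> V are square matrices acting by T *m x;
   linear functionals V -> R are row vectors acting by (u *m x) 0 0. *)
Notation Vec R N := ('cV[R]_(N.+1)).
Notation Mat R N := ('M[R]_(N.+1)).

Definition dotE {R : realType} {N : nat} (x y : Vec R N) : R :=
  \sum_(i < N.+1) x i 0 * y i 0.

Definition feval {R : realType} {N : nat} (u : 'rV[R]_(N.+1)) (x : Vec R N) : R :=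
  (u *m x) 0 0.

Definition convex_set {R : realType} {N : nat} (O : set (Vec R N)) : Prop :=
  forall x y, O x -> O y -> forall t : R, 0 <= t <= 1 ->
    O (t *: x + (1 - t) *: y).

Definition spans {R : realType} {N : nat} (O : set (Vec R N)) : Prop :=
  forall v : Vec R N, exists k (c : 'I_k -> R) (w : 'I_k -> Vec R N),
    (forall i, O (w i)) /\ v = \sum_(i < k) c i *: w i.

Definition zero_in_aff {R : realType} {N : nat} (O : set (Vec R N)) : Prop :=
  exists k (c : 'I_k -> R) (w : 'I_k -> Vec R N),
    (forall i, O (w i)) /\ \sum_(i < k) c i = 1 /\ \sum_(i < k) c i *: w i = 0.

Definition state_space {R : realType} {N : nat} (O : set (Vec R N)) : Prop :=
  compact O /\ convex_set O /\ spans O /\ ~ zero_in_aff O.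

Definition unit_effect {R : realType} {N : nat} (O : set (Vec R N))
  (u : 'rV[R]_(N.+1)) : Prop :=
  forall w, O w -> feval u w = 1.

Definition extreme_point {R : realType} {N : nat} (O : set (Vec R N))
  (x : Vec R N) : Prop :=
  O x /\ forall y z, O y -> O z -> forall t : R, 0 < t < 1 ->
    x = t *: y + (1 - t) *: z -> y = x /\ z = x.

Definition GLO {R : realType} {N : nat} (O : set (Vec R N)) : set (Mat R N) :=
  [set T | T \in unitmx /\ [set T *m x | x in O] = O].

Definition transitive_ss {R : realType} {N : nat} (O : set (Vec R N)) : Prop :=
  forall e1 e2, extreme_point O e1 -> extreme_point O e2 ->
    exists2 T, GLO O T & T *m e1 = e2.

Notation MatB R N := (g_sigma_algebraType (@open (Mat R N))).

(* normalized Haar measure of GL(Omega), as a Borel probability measure on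
   the space of matrices concentrated on GL(Omega) and invariant under left
   translation by elements of GL(Omega) *)
Definition haar_GLO {R : realType} {N : nat} (O : set (Vec R N))
  (mu : probability (MatB R N) R) : Prop :=
  mu (GLO O : set (MatB R N)) = 1%E /\
  forall S, GLO O S -> forall A : set (MatB R N), measurable A ->
    mu ((fun T : MatB R N => (S *m T : Mat R N)) @^-1` A) = mu A.

Definition ipG {R : realType} {N : nat} (O : set (Vec R N))
  (mu : probability (MatB R N) R) (x y : Vec R N) : R :=
  Rintegral mu (GLO O : set (MatB R N))
    (fun T : MatB R N => dotE ((T : Mat R N) *m x) ((T : Mat R N) *m y)).

(* Main.v *)
Require Import Defs.
From HB Require Import structures.
From mathcomp Require Import all_boot all_order all_algebra.
From mathcomp Require Import all_classical all_reals all_analysis.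
From mathcomp Require Import ring lra.
Import Order.TTheory GRing.Theory Num.Theory.
Import numFieldNormedType.Exports.
Local Open Scope classical_set_scope.
Local Open Scope ring_scope.
Set Implicit Arguments. Unset Strict Implicit. Unset Printing Implicit Defensive.
Lemma near_all_fin (T : Type) (F : set_system T) {FF : Filter F} (I : finType)
  (P : I -> T -> Prop) :
  (forall i, \forall x \near F, P i x) -> \forall x \near F, forall i, P i x.
Proof.
move=> H.
suff : forall s : seq I, \forall x \near F, forall i, i \in s -> P i x.
  move/(_ (enum I)); apply: filterS => x Hx i; apply: Hx; by rewrite mem_enum.
elim=> [|a s IH]; first by apply: filterE => x i.
apply: filterS2 (H a) IH => x Pa Ps i; rewrite inE => /orP[/eqP->//|]; exact: Ps.
Qed.

Lemma mxnorm_lt (R : realType) a b (x : 'M[R]_(a,b)) e :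
  0 < e -> (forall i j, `|x i j| < e) -> `|x| < e.
Proof.
move=> e0 H; have -> : `|x| = mx_norm x by [].
rewrite mx_normrE; elim/big_ind: _ => //=.
all: try by move=> u v hu hv; rewrite gt_max hu hv.
Qed.

Lemma mxnorm_ge (R : realType) a b (x : 'M[R]_(a,b)) i j : `|x i j| <= `|x|.
Proof.
have -> : `|x| = mx_norm x by [].
rewrite mx_normrE; apply/bigmax_geP; right; exists (i, j) => //.
Qed.

Lemma mx_continuous (R : realType) a b c d (f : 'M[R]_(a,b) -> 'M[R]_(c,d)) :
  (forall i j, continuous (fun M => f M i j)) -> continuous f.
Proof.
move=> cf M.
have FF : Filter (f @ nbhs M) by apply: fmap_filter.
apply/cvgrPdist_lt; first by apply: nbhs_filter.
move=> e e0.
have H : forall ij : 'I_c * 'I_d, \forall N \near M, `|f M ij.1 ij.2 - f N ij.1 ij.2| < e.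
  by move=> [i j] /=; have := cf i j M; move/cvgrPdist_lt; move/(_ e e0).
have := @near_all_fin _ _ (@nbhs_filter _ M) _ _ H; apply: filterS => N HN.
apply: mxnorm_lt => // i j; rewrite !mxE; exact: (HN (i, j)).
Qed.
Lemma cont_sum (T : topologicalType) (R : realType) (I : finType) (f : I -> T -> R) :
  (forall i, continuous (f i)) -> continuous (fun x => \sum_i f i x).
Proof.
move=> cf.
suff H : forall s : seq I, continuous (fun x => \sum_(i <- s) f i x) by exact: H.
elim=> [|a s IH].
  have -> : (fun x => \sum_(i <- [::]) f i x) = fun=> (0:R).
    by apply: funext => x; rewrite big_nil.
  exact: cst_continuous.
have -> : (fun x => \sum_(i <- a :: s) f i x) = (f a) + (fun x => \sum_(i <- s) f i x).
  by apply: funext => x; rewrite big_cons.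
by move=> x; apply: continuousD; [exact: cf|exact: IH].
Qed.

Lemma cont_mull (R : realType) p a b (S : 'M[R]_(p,a)) :
  continuous (fun M : 'M[R]_(a,b) => S *m M).
Proof.
apply: mx_continuous => i j.
have -> : (fun M : 'M[R]_(a,b) => (S *m M) i j) = fun M => \sum_k S i k * M k j.
  by apply: funext => M; rewrite mxE.
apply: cont_sum => k x; apply: continuousM; first exact: cst_continuous.
exact: coord_continuous.
Qed.

Lemma cont_mulr (R : realType) a b c (X : 'M[R]_(b,c)) :
  continuous (fun M : 'M[R]_(a,b) => M *m X).
Proof.
apply: mx_continuous => i j.
have -> : (fun M : 'M[R]_(a,b) => (M *m X) i j) = fun M => \sum_k M i k * X k j.
  by apply: funext => M; rewrite mxE.
apply: cont_sum => k x; apply: continuousM; last exact: cst_continuous.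
exact: coord_continuous.
Qed.

Lemma cont_feval (R : realType) N (r : 'rV[R]_(N.+1)) :
  continuous (fun y : Vec R N => feval r y).
Proof.
move=> y; rewrite /feval.
apply: (@continuous_comp _ _ _ (fun M : 'M[R]_(N.+1,1) => r *m M) (fun M : 'M[R]_(1,1) => M 0 0)).
  exact: cont_mull.
exact: coord_continuous.
Qed.
Lemma mxnorm_le (R : realType) a b (x : 'M[R]_(a,b)) e :
  0 <= e -> (forall i j, `|x i j| <= e) -> `|x| <= e.
Proof.
move=> e0 H; have -> : `|x| = mx_norm x by [].
rewrite mx_normrE; elim/big_ind: _ => //=.
all: try by move=> u v hu hv; rewrite ge_max hu hv.
Qed.

Lemma mulmx_norm (R : realType) a b c (A : 'M[R]_(a,b)) (y : 'M[R]_(b,c)) :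
  `|A *m y| <= b%:R * `|A| * `|y|.
Proof.
apply: mxnorm_le; first by rewrite !mulr_ge0.
move=> i j; rewrite mxE; apply: le_trans (ler_norm_sum _ _ _) _.
apply: le_trans (@ler_sum _ _ _ _ _ (fun _ => `|A| * `|y|) _) _.
  by move=> k _; rewrite normrM ler_pM ?mxnorm_ge.
by rewrite sumr_const card_ord -mulr_natl le_eqVlt; apply/orP; left; apply/eqP; ring.
Qed.

Lemma compact_bnd (R : realType) a b (A : set 'M[R]_(a,b)) :
  compact A -> exists B, 0 <= B /\ forall x, A x -> `|x| <= B.
Proof.
move=> /compact_bounded [M [Mreal H]].
exists (`|M| + 1); split; first by rewrite addr_ge0.
move=> x Ax; apply: H => //.
by rewrite (le_lt_trans (ler_norm M)) // ltrDl.
Qed.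

Lemma fin_bound (R : realType) (I : finType) (P : I -> R -> Prop) :
  (forall i C C', C <= C' -> P i C -> P i C') ->
  (forall i, exists C, P i C) -> exists C, forall i, P i C.
Proof.
move=> mono H; have [Cf HC] := choice H.
exists (\sum_i `|Cf i|) => i; apply: mono (HC i).
rewrite (le_trans (ler_norm _)) // (bigD1 i) //= lerDl.
by apply: sumr_ge0 => j _.
Qed.
Definition C1 {R : realType} {N : nat} (O : set (Vec R N)) : set (Mat R N) :=
  [set T | forall x, O x -> O (T *m x)].
Definition Wx {R : realType} {N : nat} (O : set (Vec R N)) (x : Vec R N) : set (Mat R N) :=
  [set T | exists2 y, O y & T *m y = x].

Lemma surj_unit (R : realType) N (O : set (Vec R N)) (T : Mat R N) :
  spans O -> (forall x, O x -> exists y, T *m y = x) -> T \in unitmx.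
Proof.
move=> sp H.
have Hj : forall j : 'I_N.+1, exists s : Vec R N, T *m s = delta_mx j 0.
  move=> j; have [k [c [w [Ow ->]]]] := sp (delta_mx j 0).
  have [yf Hy] := choice (fun i => H _ (Ow i)).
  exists (\sum_(i < k) c i *: yf i); rewrite mulmx_sumr; apply: eq_bigr => i _.
  by rewrite -scalemxAr Hy.
have [sf Hs] := choice Hj.
suff HS : T *m (\matrix_(i, j) sf j i 0) = 1%:M by case: (mulmx1_unit HS).
apply/matrixP => i j; rewrite !mxE.
have := congr1 (fun M : Vec R N => M i 0) (Hs j); rewrite !mxE /= eqxx andbT => <-.
by apply: eq_bigr => k _; rewrite mxE.
Qed.

Lemma GLO_C1 (R : realType) N (O : set (Vec R N)) T : GLO O T -> C1 O T.
Proof. by move=> [_ HT] x Ox; rewrite -HT; exists x. Qed.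

Lemma GLO_eq (R : realType) N (O : set (Vec R N)) : spans O ->
  GLO O = C1 O `&` \bigcap_(x in O) Wx O x.
Proof.
move=> sp; apply/seteqP; split => T.
  move=> [uT HT]; split; first exact: GLO_C1.
  by move=> x Ox; rewrite -HT in Ox; case: Ox => y Oy <-; exists y.
move=> [HC HW]; split.
  apply: (surj_unit sp) => x /HW [y _ <-]; by exists y.
apply/seteqP; split.
  by move=> _ [x Ox <-]; exact: HC.
by move=> x /HW [y Oy <-]; exists y.
Qed.

Lemma C1_closed (R : realType) N (O : set (Vec R N)) : compact O -> closed (C1 O).
Proof.
move=> cO; have clO : closed O by apply: compact_closed => //; exact: norm_hausdorff.
have -> : C1 O = \bigcap_(x in O) ((fun T : Mat R N => T *m x) @^-1` O).
  by apply/seteqP; split => T H x Ox; apply: H.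
apply: closed_bigI => x Ox; apply: preimage_closed => //.
by move=> T _; apply: cont_mulr.
Qed.
Lemma W_closed (R : realType) N (O : set (Vec R N)) x :
  compact O -> O !=set0 -> closed (Wx O x).
Proof.
move=> cO O0.
have [B [B0 HB]] := compact_bnd cO.
rewrite -[Wx O x]setCK closedC openE => T /= nW.
have cont : {within O, continuous (fun y : Vec R N => `|T *m y - x|)}.
  apply: continuous_subspaceT => y; apply: continuous_comp; last exact: norm_continuous.
  apply: (@continuousB _ _ _ (fun y => T *m y) (fun=> x)); first exact: cont_mull.
  exact: cst_continuous.
have [c /set_mem Oc hc] := compact_EVT_min O0 cO cont.
set m := `|T *m c - x| in hc.
have m0 : 0 < m.
  rewrite normr_gt0 subr_eq0; apply/negP => /eqP E; apply: nW; by exists c.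
have n0 : 0 < (N.+1)%:R :> R by [].
apply/nbhs_ballP; exists (m / ((N.+1)%:R * (B + 1))).
  apply: divr_gt0 => //; apply: mulr_gt0 => //; exact: ltr_wpDl.
move=> T' /= hball [y Oy hy].
rewrite -ball_normE /= ltr_pdivlMr ?mulr_gt0 ?ltr_wpDl // in hball.
have := hc y (mem_set Oy); rewrite -hy -mulmxBl => hm.
have := mulmx_norm (T - T') y; have := HB y Oy.
have : 0 <= `|T - T'| by [].
move: hball hm; set a := `|T - T'|; set b := `|(T - T') *m y|; set yy := `|y|.
move=> hball hm a0 hyB hb.
have : (N.+1)%:R * a * yy <= a * ((N.+1)%:R * (B + 1)).
  have h1 : 0 <= (N.+1)%:R * a by rewrite mulr_ge0 // ltW.
  nra.
nra.
Qed.
Lemma GLO_closed (R : realType) N (O : set (Vec R N)) :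
  state_space O -> O !=set0 -> closed (GLO O).
Proof.
move=> [cO [_ [sp _]]] O0; rewrite GLO_eq //; apply: closedI; first exact: C1_closed.
by apply: closed_bigI => x _; exact: W_closed.
Qed.

Lemma GLO_meas (R : realType) N (O : set (Vec R N)) :
  state_space O -> O !=set0 -> measurable (GLO O : set (MatB R N)).
Proof.
move=> sO O0; have := GLO_closed sO O0; move/closed_openC => op.
rewrite -[GLO O]setCK; apply: measurableC; exact: sub_sigma_algebra.
Qed.

Lemma C1_bound (R : realType) N (O : set (Vec R N)) : spans O -> compact O ->
  exists C, 0 <= C /\ forall T, C1 O T -> `|T| <= C.
Proof.
move=> sp cO; have [B [B0 HB]] := compact_bnd cO.
have : exists C, forall j : 'I_N.+1, forall T, C1 O T -> forall i, `|T i j| <= C.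
  apply: fin_bound.
    by move=> j C C' CC' H T HT i; apply: le_trans (H T HT i) CC'.
  move=> j; have [k [c [w [Ow E]]]] := sp (delta_mx j 0).
  exists (\sum_(l < k) `|c l| * B) => T HT i.
  have -> : T i j = (T *m (delta_mx j 0 : Vec R N)) i 0.
    rewrite mxE (bigD1 j) //= !mxE !eqxx /= mulr1 big1 ?addr0 // => l /negbTE hl.
    by rewrite mxE hl mulr0.
  rewrite E mulmx_sumr summxE; apply: le_trans (ler_norm_sum _ _ _) _.
  apply: ler_sum => l _; rewrite -scalemxAr mxE normrM ler_wpM2l //.
  exact: le_trans (mxnorm_ge _ _ _) (HB _ (HT _ (Ow l))).
move=> [C HC]; exists `|C|; split => // T HT; apply: mxnorm_le => // i j.
exact: le_trans (HC j T HT i) (ler_norm C).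
Qed.
Lemma feval_comb (R : realType) N (g : 'rV[R]_(N.+1)) (y z : Vec R N) (t : R) :
  feval g (t *: y + (1 - t) *: z) = t * feval g y + (1 - t) * feval g z.
Proof. by rewrite /feval mulmxDr -!scalemxAr !mxE. Qed.

Lemma feval_sum (R : realType) N (g : 'rV[R]_(N.+1)) k (c : 'I_k -> R) (w : 'I_k -> Vec R N) :
  feval g (\sum_(i < k) c i *: w i) = \sum_(i < k) c i * feval g (w i).
Proof.
rewrite /feval mulmx_sumr summxE; apply: eq_bigr => i _.
by rewrite -scalemxAr mxE.
Qed.

Lemma feval_delta_r (R : realType) N (y : Vec R N) i :
  feval (delta_mx 0 i : 'rV[R]_(N.+1)) y = y i 0.
Proof.
rewrite /feval mxE (bigD1 i) //= !mxE !eqxx /= mul1r big1 ?addr0 // => l /negbTE hl.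
by rewrite mxE hl andbF mul0r.
Qed.

Lemma feval_delta_l (R : realType) N (f : 'rV[R]_(N.+1)) j :
  feval f (delta_mx j 0 : Vec R N) = f 0 j.
Proof.
rewrite /feval mxE (bigD1 j) //= !mxE !eqxx /= mulr1 big1 ?addr0 // => l /negbTE hl.
by rewrite mxE hl mulr0.
Qed.

Lemma comb_eq (R : realType) (t a b m : R) : 0 < t < 1 -> a <= m -> b <= m ->
  t * a + (1 - t) * b = m -> a = m /\ b = m.
Proof. move=> /andP[t0 t1] am bm E; split; nra. Qed.

Lemma argmax_step (R : realType) N (A : set (Vec R N)) (g : 'rV[R]_(N.+1)) :
  compact A -> A !=set0 -> exists m, (forall w, A w -> feval g w <= m) /\
  compact (A `&` [set w | feval g w = m]) /\ (A `&` [set w | feval g w = m]) !=set0.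
Proof.
move=> cA A0.
have cont : {within A, continuous (fun y : Vec R N => feval g y)}.
  by apply: continuous_subspaceT; exact: cont_feval.
have [c /set_mem Ac hc] := compact_EVT_max A0 cA cont.
exists (feval g c); split; first by move=> w Aw; apply: hc; exact: mem_set.
split; last by exists c.
apply: compact_closedI => //.
have -> : [set w | feval g w = feval g c] = (fun w => feval g w) @^-1` [set x | x = feval g c].
  by [].
apply: preimage_closed; last exact: closed_eq.
by move=> y _; exact: cont_feval.
Qed.

Lemma lexQ (R : realType) N (gs : seq 'rV[R]_(N.+1)) : forall A : set (Vec R N),
  compact A -> A !=set0 -> exists x, A x /\
  forall y z t, A y -> A z -> 0 < t < 1 -> x = t *: y + (1 - t) *: z ->
  forall g, g \in gs -> feval g y = feval g x /\ feval g z = feval g x.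
Proof.
elim: gs => [|g gs IH] A cA A0.
  by case: A0 => x Ax; exists x; split.
have [m [Hm [cA' A'0]]] := argmax_step g cA A0.
have [x [[Ax gx] Hx]] := IH _ cA' A'0.
exists x; split => // y z t Ay Az t01 E.
have := comb_eq t01 (Hm y Ay) (Hm z Az).
rewrite -feval_comb -E gx => /(_ erefl) [gy gz].
move=> h; rewrite inE => /orP[/eqP ->|hg]; first by rewrite gy gz gx.
exact: (Hx y z t (conj Ay gy) (conj Az gz) t01 E h hg).
Qed.
Lemma ext_max (R : realType) N (O : set (Vec R N)) (f : 'rV[R]_(N.+1)) :
  compact O -> O !=set0 ->
  exists e, extreme_point O e /\ forall w, O w -> feval f w <= feval f e.
Proof.
move=> cO O0.
have [m [Hm [cA' A'0]]] := argmax_step f cO O0.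
have [x [[Ox fx] Hx]] := lexQ [seq (delta_mx 0 i : 'rV[R]_(N.+1)) | i <- enum 'I_N.+1] cA' A'0.
exists x; split; last by move=> w Ow; rewrite fx; exact: Hm.
split => // y z Oy Oz t t01 E.
have := comb_eq t01 (Hm y Oy) (Hm z Oz).
rewrite -feval_comb -E fx => /(_ erefl) [fy fz].
have H := Hx y z t (conj Oy fy) (conj Oz fz) t01 E.
split; apply/matrixP => i j; rewrite [j]ord1;
  have [] := H (delta_mx 0 i) (map_f _ (mem_enum _ i)); rewrite !feval_delta_r //.
Qed.

Lemma feval_opp (R : realType) N (f : 'rV[R]_(N.+1)) y : feval (- f) y = - feval f y.
Proof. by rewrite /feval mulNmx mxE. Qed.

Lemma mink (R : realType) N (O : set (Vec R N)) (f : 'rV[R]_(N.+1)) :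
  state_space O -> O !=set0 -> (forall e, extreme_point O e -> feval f e = 0) -> f = 0.
Proof.
move=> [cO [_ [sp _]]] O0 H.
have [e1 [ee1 H1]] := ext_max f cO O0.
have [e2 [ee2 H2]] := ext_max (- f) cO O0.
have Hw : forall w, O w -> feval f w = 0.
  move=> w Ow; apply/eqP; rewrite eq_le; apply/andP; split.
    by rewrite -(H e1 ee1); exact: H1.
  by have := H2 w Ow; rewrite !feval_opp (H e2 ee2) oppr0 lerNl oppr0.
apply/rowP => j; rewrite mxE -feval_delta_l.
have [k [c [w [Ow ->]]]] := sp (delta_mx j 0).
by rewrite feval_sum big1 // => i _; rewrite Hw ?mulr0.
Qed.
Lemma cont_meas (R : realType) N (f : Mat R N -> R) :
  continuous f -> measurable_fun setT (f : MatB R N -> R).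
Proof.
move=> cf; apply: (measurability _ (measurable_realfun.RGenOpens.measurableE R)).
move=> _ [_ [a [b ->] <-]]; apply: sub_sigma_algebra.
rewrite setTI; apply: (continuousP _).1 cf _ (itv_open _ _).
Qed.

Lemma mull_meas (R : realType) N (S : Mat R N) :
  measurable_fun setT (fun T : MatB R N => (S *m (T : Mat R N) : MatB R N)).
Proof.
apply: (@measurability _ _ (MatB R N) (MatB R N) setT _ (@open (Mat R N))) => //.
move=> _ [B oB <-]; apply: sub_sigma_algebra.
by rewrite setTI; apply: (continuousP _).1 (@cont_mull R _ _ _ S) B oB.
Qed.

Definition good {R : realType} {N : nat} (O : set (Vec R N)) (f : Mat R N -> R) :=
  continuous f /\ exists C, forall T, GLO O T -> `|f T| <= C.

Lemma good_integrable (R : realType) N (O : set (Vec R N)) (mu : probability (MatB R N) R) f :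
  state_space O -> O !=set0 -> good O f ->
  mu.-integrable (GLO O : set (MatB R N)) (EFin \o (f : MatB R N -> R)).
Proof.
move=> sO O0 [cf [C HC]]; have mG := GLO_meas sO O0.
apply: measurable_bounded_integrable => //.
- by apply: le_lt_trans (probability_le1 mu mG) _; exact: ltey.
- exact: measurable_funS (cont_meas cf).
- exists C; split; first exact: num_real.
  by move=> x Cx T hT; apply: le_trans (HC T hT) (ltW Cx).
Qed.
Lemma GLO_mul (R : realType) N (O : set (Vec R N)) S T :
  GLO O S -> GLO O T -> GLO O (S *m T).
Proof.
move=> [uS HS] [uT HT]; split; first by rewrite unitmx_mul uS uT.
apply/seteqP; split.
  move=> _ [x Ox <-]; rewrite -mulmxA.
  have h : O (T *m x) by rewrite -HT; exists x.
  by rewrite -HS; exists (T *m x).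
move=> y Oy; have : [set S *m x | x in O] y by rewrite HS.
case=> z Oz <-; have : [set T *m x | x in O] z by rewrite HT.
by case=> x Ox <-; exists x => //; rewrite mulmxA.
Qed.

Lemma GLO_inv (R : realType) N (O : set (Vec R N)) S : GLO O S -> GLO O (invmx S).
Proof.
move=> [uS HS]; split; first by rewrite unitmx_inv.
apply/seteqP; split.
  move=> _ [x Ox <-]; have : [set S *m y | y in O] x by rewrite HS.
  by case=> z Oz <-; rewrite mulKmx.
move=> y Oy; exists (S *m y); last by rewrite mulKmx.
by rewrite -HS; exists y.
Qed.

Lemma GLO_cancel (R : realType) N (O : set (Vec R N)) S T :
  GLO O S -> GLO O (S *m T) -> GLO O T.
Proof.
move=> hS hST; have := GLO_mul (GLO_inv hS) hST.
by rewrite mulmxA mulVmx ?mul1mx //; case: hS.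
Qed.

Lemma good_cst (R : realType) N (O : set (Vec R N)) (c : R) : good O (fun _ => c).
Proof. split; first exact: cst_continuous. by exists `|c|. Qed.

Lemma good_coord (R : realType) N (O : set (Vec R N)) i j :
  state_space O -> good O (fun T => T i j).
Proof.
move=> [cO [_ [sp _]]]; split; first exact: coord_continuous.
have [C [C0 HC]] := C1_bound sp cO; exists C => T /GLO_C1 /HC.
exact: le_trans (mxnorm_ge _ _ _).
Qed.

Lemma good_add (R : realType) N (O : set (Vec R N)) f g :
  good O f -> good O g -> good O (fun T => f T + g T).
Proof.
move=> [cf [C HC]] [cg [D HD]]; split.
  by move=> x; apply: continuousD; [exact: cf|exact: cg].
exists (C + D) => T hT; apply: le_trans (ler_normD _ _) _.
by apply: lerD; [exact: HC|exact: HD].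
Qed.

Lemma good_mul (R : realType) N (O : set (Vec R N)) f g :
  good O f -> good O g -> good O (fun T => f T * g T).
Proof.
move=> [cf [C HC]] [cg [D HD]]; split.
  by move=> x; apply: continuousM; [exact: cf|exact: cg].
exists (C * D) => T hT; rewrite normrM; apply: ler_pM => //.
  exact: HC. exact: HD.
Qed.

Lemma good_sum (R : realType) N (O : set (Vec R N)) (I : Type) (s : seq I) f :
  (forall i, good O (f i)) -> good O (fun T => \sum_(i <- s) f i T).
Proof.
move=> H; elim: s => [|a s IH].
  have -> : (fun T : Mat R N => \sum_(i <- [::]) f i T) = fun=> 0.
    by apply: funext => T; rewrite big_nil.
  exact: good_cst.
have -> : (fun T : Mat R N => \sum_(i <- a :: s) f i T) = fun T => f a T + \sum_(i <- s) f i T.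
  by apply: funext => T; rewrite big_cons.
exact: good_add.
Qed.

Lemma good_comp (R : realType) N (O : set (Vec R N)) f S :
  GLO O S -> good O f -> good O (fun T => f (S *m T)).
Proof.
move=> hS [cf [C HC]]; split.
  move=> x; apply: continuous_comp; [exact: cont_mull|exact: cf].
by exists C => T hT; apply: HC; exact: GLO_mul.
Qed.
Definition RI {R : realType} {N : nat} (O : set (Vec R N)) (mu : probability (MatB R N) R)
  (f : Mat R N -> R) : R := Rintegral mu (GLO O : set (MatB R N)) (f : MatB R N -> R).

Lemma RI_add (R : realType) N (O : set (Vec R N)) mu f g :
  state_space O -> O !=set0 -> good O f -> good O g ->
  RI O mu (fun T => f T + g T) = RI O mu f + RI O mu g.
Proof.
move=> sO O0 gf gg; rewrite /RI RintegralD //; first exact: GLO_meas.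
  exact: good_integrable. exact: good_integrable.
Qed.

Lemma RI_scal (R : realType) N (O : set (Vec R N)) mu f c :
  state_space O -> O !=set0 -> good O f ->
  RI O mu (fun T => c * f T) = c * RI O mu f.
Proof.
move=> sO O0 gf; rewrite /RI RintegralZl //; first exact: GLO_meas.
exact: good_integrable.
Qed.

Lemma RI_cst (R : realType) N (O : set (Vec R N)) mu c :
  state_space O -> O !=set0 -> haar_GLO O mu -> RI O mu (fun _ => c) = c.
Proof.
move=> sO O0 [h1 _]; rewrite /RI Rintegral_cst; last exact: GLO_meas.
transitivity (c * fine (1%E : \bar R)); last by rewrite /= mulr1.
by congr (_ * fine _); exact: h1.
Qed.

Lemma RI_eq (R : realType) N (O : set (Vec R N)) mu f g :
  (forall T, GLO O T -> f T = g T) -> RI O mu f = RI O mu g.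
Proof. move=> H; rewrite /RI; apply: eq_Rintegral => T /set_mem; exact: H. Qed.

Lemma RI_sum (R : realType) N (O : set (Vec R N)) mu (I : Type) (s : seq I) f :
  state_space O -> O !=set0 -> haar_GLO O mu -> (forall i, good O (f i)) ->
  RI O mu (fun T => \sum_(i <- s) f i T) = \sum_(i <- s) RI O mu (f i).
Proof.
move=> sO O0 hm H; elim: s => [|a s IH].
  transitivity (RI O mu (fun _ => 0)); first by apply: RI_eq => T _; rewrite big_nil.
  by rewrite RI_cst // big_nil.
rewrite big_cons -IH -RI_add //; try exact: good_sum; try exact: H.
by apply: RI_eq => T _; rewrite big_cons.
Qed.

Lemma RI_inv (R : realType) N (O : set (Vec R N)) mu f S :
  state_space O -> O !=set0 -> haar_GLO O mu -> GLO O S -> good O f ->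
  RI O mu (fun T => f (S *m T)) = RI O mu f.
Proof.
move=> sO O0 [h1 hinv] hS gf; rewrite /RI /Rintegral; congr fine.
have mG := GLO_meas sO O0.
set phi := fun T : MatB R N => (S *m (T : Mat R N) : MatB R N).
have E : phi @^-1` (GLO O : set (MatB R N)) = GLO O.
  apply/seteqP; split => T /=; first exact: GLO_cancel.
  exact: GLO_mul.
transitivity (\int[mu]_(x in phi @^-1` (GLO O : set (MatB R N)))
   (((EFin \o (f : MatB R N -> R)) \o phi) x))%E; first by rewrite E.
rewrite -integral_pushforward //.
- apply: eq_measure_integral; first exact: mull_meas.
  by move=> mphi A mA _; exact: (hinv S hS A mA).
- exact: mull_meas.
- by apply/measurable_realfun.measurable_EFinP; apply: cont_meas; case: gf.
- rewrite E; exact: (good_integrable mu sO O0 (good_comp hS gf)).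
Qed.
Lemma RI_pos (R : realType) N (O : set (Vec R N)) mu f :
  state_space O -> O !=set0 -> haar_GLO O mu -> good O f ->
  (forall T, GLO O T -> 0 <= f T) -> RI O mu f = 0 ->
  exists T, GLO O T /\ f T = 0.
Proof.
move=> sO O0 hm gf f0 E.
have mG := GLO_meas sO O0.
have intf := good_integrable mu sO O0 gf.
have fin := integrable_fin_num mG intf.
have [mf _] := integrableP _ _ _ intf.
have E0 : (\int[mu]_(x in (GLO O : set (MatB R N))) `|(EFin \o (f : MatB R N -> R)) x|)%E = 0%E.
  transitivity (\int[mu]_(x in (GLO O : set (MatB R N))) (EFin \o (f : MatB R N -> R)) x)%E.
    apply: eq_integral => T /set_mem hT /=; rewrite ger0_norm //; exact: f0.
  by rewrite -(fineK fin); move: E; rewrite /RI /Rintegral => -> .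
have [A [mA muA sub]] := (ae_eq_integral_abs mu mG mf).1 E0.
apply: contrapT => nE.
have : mu (GLO O : set (MatB R N)) = 0%E.
  apply: (subset_measure0 mG mA _ muA) => T hT; apply: sub => /= H.
  apply: nE; exists T; split => //.
  by have := H hT; rewrite /= => -[].
by case: hm => -> _ /eqP; rewrite onee_eq0.
Qed.
Definition IM {R : realType} {N : nat} (O : set (Vec R N)) (mu : probability (MatB R N) R)
  a b (F : Mat R N -> 'M[R]_(a,b)) : 'M[R]_(a,b) :=
  \matrix_(i, j) RI O mu (fun T => F T i j).

Definition goodM {R : realType} {N : nat} (O : set (Vec R N)) a b (F : Mat R N -> 'M[R]_(a,b)) :=
  forall i j, good O (fun T => F T i j).

Lemma good_ext (R : realType) N (O : set (Vec R N)) f g :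
  (forall T, f T = g T) -> good O f -> good O g.
Proof. by move=> H; have -> : g = f by apply: funext => T; rewrite H. Qed.

Lemma goodM_id (R : realType) N (O : set (Vec R N)) : state_space O -> goodM O (fun T => T).
Proof. by move=> sO i j; exact: good_coord. Qed.

Lemma goodM_cst (R : realType) N (O : set (Vec R N)) a b (A : 'M[R]_(a,b)) :
  goodM O (fun _ => A).
Proof. by move=> i j; exact: good_cst. Qed.

Lemma goodM_mul (R : realType) N (O : set (Vec R N)) a b c
  (F : Mat R N -> 'M[R]_(a,b)) (G : Mat R N -> 'M[R]_(b,c)) :
  goodM O F -> goodM O G -> goodM O (fun T => F T *m G T).
Proof.
move=> gF gG i j; apply: (@good_ext _ _ _ (fun T => \sum_k F T i k * G T k j)).
  by move=> T; rewrite mxE.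
by apply: good_sum => k; apply: good_mul.
Qed.

Lemma goodM_tr (R : realType) N (O : set (Vec R N)) a b (F : Mat R N -> 'M[R]_(a,b)) :
  goodM O F -> goodM O (fun T => (F T)^T).
Proof.
move=> gF i j; apply: (@good_ext _ _ _ (fun T => F T j i)); first by move=> T; rewrite mxE.
exact: gF.
Qed.

Lemma IM_mul_l (R : realType) N (O : set (Vec R N)) mu a b c (A : 'M[R]_(a,b))
  (F : Mat R N -> 'M[R]_(b,c)) :
  state_space O -> O !=set0 -> haar_GLO O mu -> goodM O F ->
  IM O mu (fun T => A *m F T) = A *m IM O mu F.
Proof.
move=> sO O0 hm gF; apply/matrixP => i j; rewrite !mxE.
rewrite (@RI_eq _ _ _ _ _ (fun T => \sum_k A i k * F T k j)); last by move=> T _; rewrite mxE.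
rewrite RI_sum //; last by move=> k; apply: good_mul; [exact: good_cst|exact: gF].
apply: eq_bigr => k _; rewrite RI_scal // mxE //.
Qed.

Lemma IM_mul_r (R : realType) N (O : set (Vec R N)) mu a b c (B : 'M[R]_(b,c))
  (F : Mat R N -> 'M[R]_(a,b)) :
  state_space O -> O !=set0 -> haar_GLO O mu -> goodM O F ->
  IM O mu (fun T => F T *m B) = IM O mu F *m B.
Proof.
move=> sO O0 hm gF; apply/matrixP => i j; rewrite !mxE.
rewrite (@RI_eq _ _ _ _ _ (fun T => \sum_k B k j * F T i k)); last first.
  by move=> T _; rewrite mxE; apply: eq_bigr => k _; rewrite mulrC.
rewrite RI_sum //; last by move=> k; apply: good_mul; [exact: good_cst|exact: gF].
apply: eq_bigr => k _; rewrite RI_scal // mxE mulrC //.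
Qed.

Lemma IM_cst (R : realType) N (O : set (Vec R N)) mu a b (A : 'M[R]_(a,b)) :
  state_space O -> O !=set0 -> haar_GLO O mu -> IM O mu (fun _ => A) = A.
Proof. by move=> sO O0 hm; apply/matrixP => i j; rewrite mxE RI_cst. Qed.

Lemma IM_eq (R : realType) N (O : set (Vec R N)) mu a b (F G : Mat R N -> 'M[R]_(a,b)) :
  (forall T, GLO O T -> F T = G T) -> IM O mu F = IM O mu G.
Proof.
by move=> H; apply/matrixP => i j; rewrite !mxE; apply: RI_eq => T hT; rewrite H.
Qed.

Lemma IM_inv (R : realType) N (O : set (Vec R N)) mu a b (F : Mat R N -> 'M[R]_(a,b)) S :
  state_space O -> O !=set0 -> haar_GLO O mu -> GLO O S -> goodM O F ->
  IM O mu (fun T => F (S *m T)) = IM O mu F.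
Proof.
move=> sO O0 hm hS gF; apply/matrixP => i j; rewrite !mxE.
exact: (RI_inv sO O0 hm hS (gF i j)).
Qed.
Lemma sqn_ge0 (R : realType) k (a : 'rV[R]_k) : 0 <= (a *m a^T) 0 0.
Proof. rewrite mxE; apply: sumr_ge0 => j _; rewrite mxE -expr2; exact: sqr_ge0. Qed.

Lemma sqn_eq0 (R : realType) k (a : 'rV[R]_k) : (a *m a^T) 0 0 = 0 -> a = 0.
Proof.
rewrite mxE => /eqP; rewrite psumr_eq0; last by move=> j _; rewrite mxE -expr2 sqr_ge0.
move=> /allP H; apply/rowP => j; rewrite mxE.
have := H j (mem_index_enum j); rewrite mxE /=.
by rewrite mulf_eq0 orbb => /eqP.
Qed.

Lemma unit_of_rowinj (R : realType) k (A : 'M[R]_k.+1) :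
  (forall r : 'rV[R]_k.+1, r *m A = 0 -> r = 0) -> A \in unitmx.
Proof.
move=> H; rewrite unitmxE unitfE; apply/negP => /det0P [v v0 vA].
by move: v0; rewrite (H v vA) eqxx.
Qed.

Lemma IM_posdef (R : realType) N (O : set (Vec R N)) mu (F : Mat R N -> Mat R N) :
  state_space O -> O !=set0 -> haar_GLO O mu -> goodM O F ->
  (forall T, GLO O T -> F T \in unitmx) ->
  forall r : 'rV[R]_(N.+1), r *m IM O mu (fun T => F T *m (F T)^T) = 0 -> r = 0.
Proof.
move=> sO O0 hm gF uF r H.
have gFF : goodM O (fun T => F T *m (F T)^T) by apply: goodM_mul => //; exact: goodM_tr.
have gFF' : goodM O (fun T => r *m (F T *m (F T)^T)).
  by apply: goodM_mul => //; exact: goodM_cst.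
have : (r *m IM O mu (fun T => F T *m (F T)^T) *m r^T) 0 0 = 0 by rewrite H mul0mx mxE.
rewrite -IM_mul_l // -IM_mul_r // mxE => E.
have nn : forall T, GLO O T -> 0 <= (r *m (F T *m (F T)^T) *m r^T) 0 0.
  move=> T hT; rewrite (_ : r *m (F T *m (F T)^T) *m r^T = (r *m F T) *m (r *m F T)^T).
    exact: sqn_ge0.
  by rewrite trmx_mul !mulmxA.
have [T [hT HT]] := RI_pos sO O0 hm (goodM_mul gFF' (goodM_cst O r^T) 0 0) nn E.
have E2 : r *m (F T *m (F T)^T) *m r^T = (r *m F T) *m (r *m F T)^T.
  by rewrite trmx_mul !mulmxA.
have rF : r *m F T = 0 by apply: sqn_eq0; rewrite -E2.
by rewrite -[r](mulmxK (uF T hT)) rF mul0mx.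
Qed.
Lemma u_inv (R : realType) N (O : set (Vec R N)) u T :
  spans O -> unit_effect O u -> GLO O T -> u *m T = u.
Proof.
move=> sp hu hT.
have Hv : forall v, feval u (T *m v) = feval u v.
  move=> v; have [k [c [w [Ow ->]]]] := sp v.
  rewrite mulmx_sumr.
  have -> : \sum_(i < k) T *m (c i *: w i) = \sum_(i < k) c i *: (T *m w i).
    by apply: eq_bigr => i _; rewrite scalemxAr.
  rewrite !feval_sum; apply: eq_bigr => i _; rewrite !hu //.
  exact: (GLO_C1 hT (Ow i)).
apply/rowP => j.
rewrite -(feval_delta_l (u *m T)) -(feval_delta_l u) {1}/feval -mulmxA; exact: Hv.
Qed.

Lemma mx_ext (R : realType) a k (A B : 'M[R]_(a,k)) :
  (forall x : 'cV[R]_k, A *m x = B *m x) -> A = B.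
Proof.
move=> H; apply/matrixP => i j.
have := congr1 (fun M : 'cV[R]_a => M i 0) (H (delta_mx j 0)).
by rewrite -!colE !mxE.
Qed.

Lemma dotE_mx (R : realType) N (a b : Vec R N) : dotE a b = (a^T *m b) 0 0.
Proof. by rewrite /dotE mxE; apply: eq_bigr => i _; rewrite mxE. Qed.

Lemma mul_mx11 (R : realType) a b (A : 'M[R]_(a,1)) (s : 'M[R]_(1,b)) (x : 'M[R]_(b,1)) :
  A *m (s *m x) = (s *m x) 0 0 *: A.
Proof. by rewrite {1}[s *m x]mx11_scalar mul_mx_scalar. Qed.
Lemma feval_subZ (R : realType) N (f g : 'rV[R]_(N.+1)) (c : R) y :
  feval (f - c *: g) y = feval f y - c * feval g y.
Proof.
rewrite /feval mulmxBl -scalemxAl.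
rewrite [in LHS]mxE; congr (_ + _); rewrite [LHS]mxE; congr (- _); exact: mxE.
Qed.

Unset Implicit Arguments.

Theorem lemma3p1 (R : realType) (N : nat) (Omega : set (Vec R N))
  (mu : probability (MatB R N) R) (omegaM : Vec R N)
  (u : 'rV[R]_(N.+1)) (uhat : Vec R N) :
  state_space Omega ->
  transitive_ss Omega ->
  haar_GLO Omega mu ->
  Omega omegaM ->
  (forall T, GLO Omega T -> T *m omegaM = omegaM) ->
  dotE omegaM omegaM = 1 ->
  unit_effect Omega u ->
  (forall x : Vec R N, feval u x = ipG Omega mu uhat x) ->
  uhat = omegaM.
Proof.
move=> sO tr hm Om fixM dM hu hip.
have O0 : Omega !=set0 by exists omegaM.
have [cO [_ [sp _]]] := sO.
set Q := IM Omega mu (fun T => T).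
set K := IM Omega mu (fun T => T *m T^T).
set M := IM Omega mu (fun T => T^T *m T).
have gid := goodM_id sO.
have SQ : forall S, GLO Omega S -> S *m Q = Q.
  move=> S hS; rewrite /Q -IM_mul_l //.
  exact: (IM_inv sO O0 hm hS gid).
have gK : goodM Omega (fun T => T *m T^T) by apply: goodM_mul => //; exact: goodM_tr.
have SK : forall S, GLO Omega S -> S *m K *m S^T = K.
  move=> S hS; rewrite /K -IM_mul_l // -IM_mul_r //; last first.
    by apply: goodM_mul => //; exact: goodM_cst.
  rewrite -(IM_inv sO O0 hm hS gK); apply: IM_eq => T _.
  by rewrite trmx_mul !mulmxA.
have uQ : u *m Q = u.
  rewrite /Q -IM_mul_l // -[RHS](IM_cst (mu := mu) u sO O0 hm); apply: IM_eq => T hT.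
  exact: u_inv.
have Ku : K \in unitmx.
  apply: unit_of_rowinj => r.
  move=> rK; have := IM_posdef (F := fun T => T) sO O0 hm gid.
  by move=> H; apply: (H _ r rK) => T [].
have fixC : forall v : Vec R N, (forall S, GLO Omega S -> S *m v = v) ->
    exists c, v = c *: (u *m K)^T.
  move=> v hv.
  set phi := v^T *m invmx K.
  have phiS : forall S, GLO Omega S -> phi *m S = phi.
    move=> S hS; have uS : S \in unitmx by case: hS.
    have uKS : K *m S^T \in unitmx by rewrite unitmx_mul Ku unitmx_tr uS.
    rewrite -[LHS](mulmxK uKS) -[RHS](mulmxK uKS); congr (_ *m _).
    rewrite !mulmxA -(mulmxA phi S K) -(mulmxA phi (S *m K)) (SK S hS).
    by rewrite /phi mulmxKV // -trmx_mul (hv S hS).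
  have [e1 [ee1 _]] := ext_max 0 cO O0.
  set c := feval phi e1.
  have : phi - c *: u = 0.
    apply: (mink sO O0) => e ee.
    have [S1 hS1 <-] := tr e1 e ee1 ee.
    have h1 : feval u (S1 *m e1) = 1 by apply: hu; exact: (GLO_C1 hS1 (proj1 ee1)).
    rewrite feval_subZ h1 mulr1 /c /feval mulmxA (phiS S1 hS1).
    by rewrite subrr.
  move/eqP; rewrite subr_eq0 => /eqP hphi.
  exists c; rewrite -[v]trmxK -[v^T](mulmxKV Ku) -/phi hphi.
  by rewrite -scalemxAl linearZ.
have [c0 hc0] := fixC omegaM fixM.
have c0n : c0 != 0.
  apply/eqP => c00; move: dM; rewrite hc0 c00 scale0r.
  by rewrite /dotE big1 => [/esym/eqP|i _]; [rewrite oner_eq0|rewrite mxE mul0r].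
have fixV : forall v : Vec R N, (forall S, GLO Omega S -> S *m v = v) ->
    v = feval u v *: omegaM.
  move=> v hv; have [c hc] := fixC v hv.
  have E : v = (c / c0) *: omegaM by rewrite hc hc0 scalerA divfK.
  rewrite {2}E /feval -scalemxAr mxE.
  have := hu _ Om; rewrite /feval => ->; by rewrite mulr1.
have QE : Q = omegaM *m u.
  apply: mx_ext => x.
  have hx : forall S, GLO Omega S -> S *m (Q *m x) = Q *m x.
    by move=> S hS; rewrite mulmxA SQ.
  by rewrite (fixV _ hx) /feval mulmxA uQ -mulmxA mul_mx11.
have gM : goodM Omega (fun T => T^T *m T) by apply: goodM_mul => //; exact: goodM_tr.
have OM : omegaM^T *m M = u.
  rewrite /M -IM_mul_l //.
  transitivity (IM Omega mu (fun T => omegaM^T *m T)).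
    by apply: IM_eq => T hT; rewrite mulmxA -trmx_mul fixM.
  rewrite IM_mul_l // -/Q QE mulmxA.
  rewrite [omegaM^T *m omegaM]mx11_scalar -dotE_mx dM mul1mx //.
have UM : uhat^T *m M = u.
  apply: mx_ext => x; apply/matrixP => i j; rewrite [i]ord1 [j]ord1.
  rewrite -/(feval u x) hip /ipG /M -IM_mul_l // -IM_mul_r //; last first.
    by apply: goodM_mul => //; exact: goodM_cst.
  rewrite mxE; apply: RI_eq => T _.
  by rewrite dotE_mx trmx_mul !mulmxA.
have : (uhat - omegaM)^T *m M = 0 by rewrite linearB /= mulmxBl UM OM subrr.
have -> : M = IM Omega mu (fun T => T^T *m (T^T)^T).
  by rewrite /M; apply: IM_eq => T _; rewrite trmxK.
have Mu : forall T, GLO Omega T -> T^T \in unitmx by move=> T [uT _]; rewrite unitmx_tr.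
move=> H0; have := IM_posdef (F := fun T => T^T) sO O0 hm (goodM_tr gid).
move=> H; have := H Mu _ H0.
by move/eqP; rewrite linearB /= subr_eq0 => /eqP; exact: trmx_inj.
Qed.
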